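(* Let $n_1<n_2<n_3$ be positive integers with $\gcd(n_1,n_2,n_3)=1$ minimally generating a nonsymmetric numerical semigroup $S$, with $\gcd(\delta_1,\delta_3)=1$. Let $\mathbf x\in\{\boldsymbol\lambda,\boldsymbol\mu\}$ and let $1\le i\le\max\{\delta_1,\delta_3\}$ be such that the B\'ezout couple $\mathbf x_i$ (of type $\mathbf x$) is reducible. Then there exists a positive integer $l<i$ such that $\tau_{\mathbf x_l}^+\le\tau_{\mathbf x_i}^+$ (componentwise), where $\mathbf x_l$ is the B\'ezout couple of $l$ of the same type.
   Context: $S=\langle n_1,n_2,n_3\rangle$; minimally generated means no $n_i$ lies in the submonoid generated by the other two; $S$ is symmetric if, with $F=\max(\mathbb Z\setminus S)$, $x\in\mathbb Z\setminus S$ implies $F-x\in S$. For $\{i,j,k\}=\{1,2,3\}$, $c_i=\min\{c\in\mathbb Z^+: cn_i\in\langle n_j,n_k\rangle\}$ and, $S$ being nonsymmetric, $r_{ij},r_{ik}$ are the unique positive integers with $c_in_i=r_{ij}n_j+r_{ik}n_k$; moreover $c_i=r_{ji}+r_{ki}$. Set $\delta_1=c_1-r_{12}-r_{13}>0$, $\delta_3=r_{31}+r_{32}-c_3>0$, $\mathbf v_1=(c_1,-r_{12},-r_{13})$, $\mathbf v_3=(r_{31},r_{32},-c_3)$. For $i\in\{1,\ldots,\max\{\delta_1,\delta_3\}\}$: $\boldsymbol\lambda_i$ is the unique $(a,b)\in\mathbb Z^2$ with $a\delta_1+b\delta_3=i$, $0<b\le\delta_1$; $\boldsymbol\mu_i$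 is the unique $(a,b)$ with $a\delta_1+b\delta_3=i$, $0<a\le\delta_3$. $\boldsymbol\lambda_i$ is reducible if $\boldsymbol\lambda_i=\boldsymbol\lambda_j+\boldsymbol\lambda_k$ for some $j,k\in\{1,\ldots,\max\{\delta_1,\delta_3\}\}$, and similarly for $\boldsymbol\mu_i$. For $(a,b)\in\mathbb Z^2$, $\tau_{(a,b)}=a\mathbf v_1+b\mathbf v_3\in\mathbb Z^3$. For $\mathbf z\in\mathbb Z^3$, $\mathbf z^+,\mathbf z^-\in\mathbb N^3$ are the unique vectors with $\mathbf z=\mathbf z^+-\mathbf z^-$ and $\mathbf z^+\cdot\mathbf z^-=0$. *)

(* Defs.v *)
From mathcomp Require Import all_boot all_order all_algebra.
Set Implicit Arguments. Unset Strict Implicit. Unset Printing Implicit Defensive.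
Import Order.TTheory GRing.Theory Num.Theory.
Local Open Scope ring_scope.

Definition in_sg3 (n1 n2 n3 : nat) (x : int) : Prop :=
  exists a b c : nat, x = ((a * n1 + b * n2 + c * n3)%N)%:Z.

Definition in_sg2 (m1 m2 x : nat) : Prop :=
  exists a b : nat, x = (a * m1 + b * m2)%N.

Definition min_gen (n1 n2 n3 : nat) : Prop :=
  ~ in_sg2 n2 n3 n1 /\ ~ in_sg2 n1 n3 n2 /\ ~ in_sg2 n1 n2 n3.

Definition sg_symmetric (n1 n2 n3 : nat) : Prop :=
  exists F : int, ~ in_sg3 n1 n2 n3 F
    /\ (forall x : int, F < x -> in_sg3 n1 n2 n3 x)
    /\ (forall x : int, ~ in_sg3 n1 n2 n3 x -> in_sg3 n1 n2 n3 (F - x)).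

Definition is_c (ni nj nk c : nat) : Prop :=
  (0 < c)%N /\ in_sg2 nj nk (c * ni)
  /\ forall c' : nat, (0 < c')%N -> in_sg2 nj nk (c' * ni) -> (c <= c')%N.

Definition delta1 (c1 r12 r13 : nat) : int := c1%:Z - r12%:Z - r13%:Z.
Definition delta3 (c3 r31 r32 : nat) : int := r31%:Z + r32%:Z - c3%:Z.

Inductive btype := Lam | Mu.

Definition bezout (t : btype) (d1 d3 i : int) (x : int * int) : Prop :=
  x.1 * d1 + x.2 * d3 = i /\
  match t with
  | Lam => 0 < x.2 <= d1
  | Mu => 0 < x.1 <= d3
  end.

Definition reducible (t : btype) (d1 d3 : int) (x : int * int) : Prop :=
  exists j k : int,
    1 <= j <= Num.max d1 d3 /\ 1 <= k <= Num.max d1 d3 /\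
    exists y z : int * int,
      bezout t d1 d3 j y /\ bezout t d1 d3 k z /\ x = (y.1 + z.1, y.2 + z.2).

Definition vec3 := (int * int * int)%type.

Definition tau (v1 v3 : vec3) (x : int * int) : vec3 :=
  (x.1 * v1.1.1 + x.2 * v3.1.1, x.1 * v1.1.2 + x.2 * v3.1.2,
   x.1 * v1.2 + x.2 * v3.2).

Definition vpos (z : vec3) : vec3 :=
  (Num.max z.1.1 0, Num.max z.1.2 0, Num.max z.2 0).

Definition vle (z w : vec3) : Prop :=
  z.1.1 <= w.1.1 /\ z.1.2 <= w.1.2 /\ z.2 <= w.2.

(* Main.v *)
Require Import Defs.
From mathcomp Require Import all_boot all_order all_algebra.
From mathcomp Require Import zify ring lra.
Import Order.TTheory GRing.Theory Num.Theory.
Local Open Scope ring_scope.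

Lemma key (n1 n2 n3 c1 c3 r12 r13 r31 r32 a b j : int) :
  0 < n1 -> n1 < n2 -> n2 < n3 ->
  c1*n1 = r12*n2 + r13*n3 -> c3*n3 = r31*n1+r32*n2 ->
  a*(c1-r12-r13) + b*(r31+r32-c3) = j -> 0 < j ->
  (0 <= a*(-r12)+b*r32 -> a*(-r13)+b*(-c3) <= 0) /\
  (a*(-r12)+b*r32 <= 0 -> 0 <= a*c1+b*r31).
Proof.
move=> h1 h2 h3 e1 e3 ej hj.
set t1 := a*c1+b*r31; set t2 := a*(-r12)+b*r32; set t3 := a*(-r13)+b*(-c3).
have S : t1 + t2 + t3 = j by rewrite -ej /t1 /t2 /t3; ring.
have N : t1*n1 + t2*n2 + t3*n3 = 0.
  have -> : t1*n1 + t2*n2 + t3*n3 = a*(c1*n1 - r12*n2 - r13*n3) + b*(r31*n1+r32*n2 - c3*n3)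
    by rewrite /t1 /t2 /t3; ring.
  by rewrite e1 e3; ring.
have I1 : t2*(n2-n1) + t3*(n3-n1) = - (j*n1).
  have -> : t2*(n2-n1) + t3*(n3-n1) = (t1*n1 + t2*n2 + t3*n3) - (t1+t2+t3)*n1 by ring.
  by rewrite N S; ring.
have I3 : t1*(n3-n1) + t2*(n3-n2) = j*n3.
  have -> : t1*(n3-n1) + t2*(n3-n2) = (t1+t2+t3)*n3 - (t1*n1 + t2*n2 + t3*n3) by ring.
  by rewrite N S; ring.
split=> ht.
- nia.
- nia.
Qed.

Lemma posle (u v : int) : u <= 0 \/ 0 <= v -> Num.max u 0 <= Num.max (u+v) 0.
Proof.
move=> h; rewrite !maxEge.
case: ifP => h1; case: ifP => h2; lia.
Qed.

Lemma vle_sum (u v : vec3) :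
  (u.1.1 <= 0 \/ 0 <= v.1.1) -> (u.1.2 <= 0 \/ 0 <= v.1.2) -> (u.2 <= 0 \/ 0 <= v.2) ->
  vle (vpos u) (vpos (u.1.1 + v.1.1, u.1.2 + v.1.2, u.2 + v.2)).
Proof. by move=> h1 h2 h3; split; [|split]; apply: posle. Qed.

Lemma tau_add v1 v3 (y z : int * int) :
  tau v1 v3 (y.1 + z.1, y.2 + z.2) =
  ((tau v1 v3 y).1.1 + (tau v1 v3 z).1.1, (tau v1 v3 y).1.2 + (tau v1 v3 z).1.2,
   (tau v1 v3 y).2 + (tau v1 v3 z).2).
Proof. by rewrite /tau /=; congr (_, _, _); ring. Qed.

Lemma min_or (u v : int) : (u <= v) -> u <= 0 \/ 0 <= v.
Proof. lia. Qed.

Theorem lemma2p14 (n1 n2 n3 c1 c3 r12 r13 r31 r32 : nat) (t : btype)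
    (i : int) (x : int * int) :
  (0 < n1)%N -> (n1 < n2)%N -> (n2 < n3)%N ->
  gcdn (gcdn n1 n2) n3 = 1%N ->
  min_gen n1 n2 n3 ->
  ~ sg_symmetric n1 n2 n3 ->
  is_c n1 n2 n3 c1 -> is_c n3 n1 n2 c3 ->
  (0 < r12)%N -> (0 < r13)%N -> (c1 * n1 = r12 * n2 + r13 * n3)%N ->
  (0 < r31)%N -> (0 < r32)%N -> (c3 * n3 = r31 * n1 + r32 * n2)%N ->
  gcdz (delta1 c1 r12 r13) (delta3 c3 r31 r32) = 1 ->
  1 <= i <= Num.max (delta1 c1 r12 r13) (delta3 c3 r31 r32) ->
  bezout t (delta1 c1 r12 r13) (delta3 c3 r31 r32) i x ->
  reducible t (delta1 c1 r12 r13) (delta3 c3 r31 r32) x ->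
  exists l : int, 0 < l < i /\
    exists y : int * int,
      bezout t (delta1 c1 r12 r13) (delta3 c3 r31 r32) l y /\
      vle (vpos (tau (c1%:Z, - r12%:Z, - r13%:Z) (r31%:Z, r32%:Z, - c3%:Z) y))
          (vpos (tau (c1%:Z, - r12%:Z, - r13%:Z) (r31%:Z, r32%:Z, - c3%:Z) x)).
Proof.
move=> hn1 hn12 hn23 _ _ _ _ _ hr12 hr13 e1 hr31 hr32 e3 _ _ Bx R.
have hd1 : 0 < delta1 c1 r12 r13.
  rewrite /delta1; have : (r12 + r13 < c1)%N by nia. lia.
have hd3 : 0 < delta3 c3 r31 r32.
  rewrite /delta3; have : (c3 < r31 + r32)%N by nia. lia.
move: Bx R hd1 hd3.
set d1 := delta1 c1 r12 r13; set d3 := delta3 c3 r31 r32 => Bx R hd1 hd3.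
have e1' : c1%:Z * n1%:Z = r12%:Z * n2%:Z + r13%:Z * n3%:Z by lia.
have e3' : c3%:Z * n3%:Z = r31%:Z * n1%:Z + r32%:Z * n2%:Z by lia.
have hmax : Num.max d1 d3 < d1 + d3 by rewrite maxEge; case: ifP; lia.
case: R => j [k [/andP[hj1 hjM] [/andP[hk1 hkM] [y [z [By [Bz ex]]]]]]].
have hi : i = j + k.
  case: Bx => <- _; case: By => <- _; case: Bz => <- _; rewrite ex /=; ring.
have notboth : forall (w : int * int) (l : int), w.1 * d1 + w.2 * d3 = l ->
    l <= Num.max d1 d3 -> ~ (1 <= w.1 /\ 1 <= w.2).
  move=> w l <- hl [h1 h2]; nia.
have Kd : forall (w : int * int) (l : int), w.1 * d1 + w.2 * d3 = l -> 0 < l ->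
  (0 <= w.1 * (- r12%:Z) + w.2 * r32%:Z ->
     w.1 * (- r13%:Z) + w.2 * (- c3%:Z) <= 0) /\
  (w.1 * (- r12%:Z) + w.2 * r32%:Z <= 0 -> 0 <= w.1 * c1%:Z + w.2 * r31%:Z).
  move=> w l ew hl.
  have ew' : w.1 * (c1%:Z - r12%:Z - r13%:Z) + w.2 * (r31%:Z + r32%:Z - c3%:Z) = l
    by rewrite -ew /d1 /d3 /delta1 /delta3.
  apply: (@key n1 n2 n3 c1 c3 r12 r13 r31 r32 w.1 w.2 l ltac:(lia) ltac:(lia) ltac:(lia) e1' e3' ew' hl).
case: (By) => ey hy; case: (Bz) => ez hz.
have [Ky1 Ky2] := Kd y j ey ltac:(lia).
have [Kz1 Kz2] := Kd z k ez ltac:(lia).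
have ny := notboth y j ey hjM; have nz := notboth z k ez hkM.
rewrite ex tau_add.
case: t Bx By Bz hy hz => Bx By Bz hy hz.
- have ty2 : 0 <= y.1 * (- r12%:Z) + y.2 * r32%:Z.
    have : y.1 <= 0 by lia. nia.
  have tz2 : 0 <= z.1 * (- r12%:Z) + z.2 * r32%:Z.
    have : z.1 <= 0 by lia. nia.
  have ty3 := Ky1 ty2; have tz3 := Kz1 tz2.
  case: (lerP (y.1 * c1%:Z + y.2 * r31%:Z) (z.1 * c1%:Z + z.2 * r31%:Z)) => hc.
  + exists j; split; first lia.
    exists y; split => //; apply: vle_sum => /=; try lia.
  + exists k; split; first lia.
    exists z; split => //.
    set tz := tau _ _ z; set ty := tau _ _ y.
    have -> : (ty.1.1 + tz.1.1, ty.1.2 + tz.1.2, ty.2 + tz.2) =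
              (tz.1.1 + ty.1.1, tz.1.2 + ty.1.2, tz.2 + ty.2)
      by congr (_,_,_); rewrite addrC.
    apply: vle_sum; rewrite /tz /ty /=; lia.
- have ty2 : y.1 * (- r12%:Z) + y.2 * r32%:Z <= 0.
    have : y.2 <= 0 by lia. nia.
  have tz2 : z.1 * (- r12%:Z) + z.2 * r32%:Z <= 0.
    have : z.2 <= 0 by lia. nia.
  have ty1 := Ky2 ty2; have tz1 := Kz2 tz2.
  case: (lerP (y.1 * (- r13%:Z) + y.2 * (- c3%:Z)) (z.1 * (- r13%:Z) + z.2 * (- c3%:Z))) => hc.
  + exists j; split; first lia.
    exists y; split => //; apply: vle_sum => /=; try lia.
  + exists k; split; first lia.
    exists z; split => //.
    set tz := tau _ _ z; set ty := tau _ _ y.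
    have -> : (ty.1.1 + tz.1.1, ty.1.2 + tz.1.2, ty.2 + tz.2) =
              (tz.1.1 + ty.1.1, tz.1.2 + ty.1.2, tz.2 + ty.2)
      by congr (_,_,_); rewrite addrC.
    apply: vle_sum; rewrite /tz /ty /=; lia.
Qed.
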